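(* Let $\triangle=(V,E,T)$ be a triangulation of a polygonal domain $\Theta\subset\mathbb{R}^2$ in which every triangle has at least one interior edge, and let $\mathbb{S}_2$ be the set of all functions obtained from the $\mathbb{S}_2$-construction (see context) as the linear polynomials $Q_1,\dots,Q_{n_v}$ range over all linear polynomials. Then: (i) $\mathbb{S}_2$ is a linear subspace of $\{S\in C^0(\Theta): S|_{t}\in\mathbb{P}_3 \text{ for all } t\in T\}$; (ii) every $S\in\mathbb{S}_2$ is $C^1$-smooth at each vertex $v_i$, in the sense that all polynomial pieces $S|_t$ with $v_i\in t$ have the same value and the same gradient at $v_i$, namely $S(v_i)=Q_i(v_i)$ and $\nabla S(v_i)=\nabla Q_i$; (iii) $\dim \mathbb{S}_2 = 3n_v$; (iv) $\mathbb{P}_3\subset \mathbb{S}_2$; more precisely, if $P\in\mathbb{P}_3$ and each $Q_i$ is chosen as the first-order Taylor polynomial $Q_i(p)=P(v_i)+\nabla P(v_i)\cdot(p-v_i)$, then the constructed spline equals $P$ on $\Theta$.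
   Context: A triangulation $\triangle=(V,E,T)$ of a polygonal domain $\Theta$ consists of vertices $V=\{v_1,\dots,v_{n_v}\}$, edges $E$ (segments between two vertices) and nondegenerate triangles $T$, whose union is $\Theta$ and such that two distinct triangles intersect in the empty set, a common vertex, or a common edge; $E,V$ are exactly the edges and vertices of the triangles. $E^b\subseteq E$ is the set of edges on $\partial\Theta$; every interior edge $e\in E\setminus E^b$ is shared by exactly two triangles. $\mathbb{P}_d$ denotes bivariate polynomials of total degree $\le d$. Bernstein–Bézier form: for an ordered triangle $\langle u_0,u_1,u_2\rangle$ with barycentric coordinates $(\tau_0,\tau_1,\tau_2)$ and $\mathbb{D}_3=\{d=(d_0,d_1,d_2)\in\mathbb{N}_0^3: d_0+d_1+d_2=3\}$, every $p\in\mathbb{P}_3$ is uniquely $p=\sum_{d\in\mathbb{D}_3} c_d\, \frac{3!}{d_0!d_1!d_2!}\tau_0^{d_0}\tau_1^{d_1}\tau_2^{d_2}$; we call $c_d$ the coefficient at the domain point $\xi_d=(d_0u_0+d_1u_1+d_2u_2)/3$ (this labelling does not depend on the ordering of the vertices). Data: a linear polynomial $Q_i$ is given for each vertex $v_i$. For vertices $u,w$ joined by an edge write $p_u=Q_u(u)$ and $p_{u,w}=Q_u(\tfrac23 u+\tfrac13 w)$ (here $Q_u$ is the polynomial of the vertex $u$). Functional $\Gamma$: let $t_m=[v_i,v_j,v_k]\in T$ and let $e=[v_i,v_j]$ be an interior edge, shared with $t_{m'}=[v_i,v_j,v_{k'}]$. Let $(a_0,a_1,a_2)$ be the barycentric coordinates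 of $v_{k'}$ with respect to $(v_i,v_j,v_k)$ (so $a_2<0$). Define $\Gamma(t_m,e)=\frac{1}{2a_2(1-a_2)}\Big(p_{k',i}+p_{k',j}-a_0^2(p_i+p_{i,j})-2a_0a_1(p_{i,j}+p_{j,i})-a_1^2(p_{j,i}+p_j)-2a_0a_2\,p_{i,k}-2a_1a_2\,p_{j,k}-a_2^2(p_{k,i}+p_{k,j})\Big)$, where $p_{i,j}$ abbreviates $p_{v_i,v_j}$ etc. $\mathbb{S}_2$-construction: on each $t_m=[v_i,v_j,v_k]\in T$, $S|_{t_m}$ is the cubic whose Bernstein coefficients are: at the domain point $v_u$ the value $p_u$, at $\tfrac23 v_u+\tfrac13 v_w$ the value $p_{u,w}$ (for all ordered pairs of distinct vertices $u,w$ of $t_m$), and at the centroid $\tfrac13(v_i+v_j+v_k)$ the average of $\Gamma(t_m,e)$ over the interior edges $e$ of $t_m$. *)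

(* Defs.v *)
From HB Require Import structures.
From mathcomp Require Import all_boot all_order all_algebra.
From mathcomp Require Import mpoly.

Set Implicit Arguments.
Unset Strict Implicit.
Unset Printing Implicit Defensive.

Import Order.TTheory GRing.Theory Num.Theory.
Local Open Scope ring_scope.

(* twice the signed area of the triangle (a,b,c); points are pairs (x,y) *)
Definition area2 (T : comRingType) (a b c : T * T) : T :=
  (b.1 - a.1) * (c.2 - a.2) - (b.2 - a.2) * (c.1 - a.1).

Definition i0 : 'I_3 := @Ordinal 3 0 isT.
Definition i1 : 'I_3 := @Ordinal 3 1 isT.
Definition i2 : 'I_3 := @Ordinal 3 2 isT.

Section Defs.
Variable R : realFieldType.
Local Notation point := (R * R)%type.
Local Notation poly2 := {mpoly R[2]}.

Definition coord (x : point) (r : 'I_2) : R := if val r == 0%N then x.1 else x.2.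

Definition evalp (P : poly2) (x : point) : R := P.@[coord x].

(* P in P_d  <->  total degree <= d  <->  msize P <= d+1 *)
Definition inPd (d : nat) (P : poly2) : bool := (msize P <= d.+1)%N.

Definition bary (u0 u1 u2 x : point) : R * R * R :=
  let A := area2 u0 u1 u2 in
  (area2 x u1 u2 / A, area2 u0 x u2 / A, area2 u0 u1 x / A).

Definition Xpt : poly2 * poly2 := ('X_(Ordinal (isT : 0 < 2)%N), 'X_(Ordinal (isT : 1 < 2)%N)).
Definition Cpt (x : point) : poly2 * poly2 := (x.1%:MP, x.2%:MP).
Definition baryP (u0 u1 u2 : point) : poly2 * poly2 * poly2 :=
  let iA := (area2 u0 u1 u2)^-1%:MP in
  (iA * area2 Xpt (Cpt u1) (Cpt u2), iA * area2 (Cpt u0) Xpt (Cpt u2),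
   iA * area2 (Cpt u0) (Cpt u1) Xpt).

Definition BBcubic (u0 u1 u2 : point) (c : nat -> nat -> nat -> R) : poly2 :=
  let '(t0, t1, t2) := baryP u0 u1 u2 in
  \sum_(d0 < 4) \sum_(d1 < 4 - d0)
     (c d0 d1 (3 - d0 - d1)%N * ((3`!)%:R / (d0`! * d1`! * (3 - d0 - d1)`!)%:R))
       *: (t0 ^+ d0 * t1 ^+ d1 * t2 ^+ (3 - d0 - d1)).

Variables (nv nt : nat) (vert : 'I_nv -> point) (tri : 'I_nt -> 'I_3 -> 'I_nv).

Definition tv (m : 'I_nt) (k : 'I_3) : point := vert (tri m k).
Definition tri_has (m : 'I_nt) (i : 'I_nv) : bool := [exists k, tri m k == i].

Definition in_tri (m : 'I_nt) (x : point) : Prop :=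
  exists l0 l1 l2 : R, [/\ 0 <= l0, 0 <= l1, 0 <= l2, l0 + l1 + l2 = 1 &
    x = (l0 * (tv m i0).1 + l1 * (tv m i1).1 + l2 * (tv m i2).1,
         l0 * (tv m i0).2 + l1 * (tv m i1).2 + l2 * (tv m i2).2)].

Definition in_seg (a b x : point) : Prop :=
  exists l : R, [/\ 0 <= l, l <= 1 &
    x = ((1 - l) * a.1 + l * b.1, (1 - l) * a.2 + l * b.2)].

Definition conforming : Prop :=
  forall m m' : 'I_nt, m != m' ->
    (forall x, ~ (in_tri m x /\ in_tri m' x)) \/
    (exists i, [/\ tri_has m i, tri_has m' i &
        forall x, in_tri m x -> in_tri m' x -> x = vert i]) \/
    (exists i j, [/\ i != j, tri_has m i && tri_has m j, tri_has m' i && tri_has m' j &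
        forall x, in_tri m x -> in_tri m' x -> in_seg (vert i) (vert j) x]).

(* (V,E,T) is a triangulation of Theta := union of its triangles *)
Definition is_triangulation : Prop :=
  [/\ injective vert,
      forall m, area2 (tv m i0) (tv m i1) (tv m i2) != 0,
      forall i, exists m, tri_has m i,
      conforming &
      forall i j, i != j -> (#|[set m | tri_has m i && tri_has m j]| <= 2)%N].

Definition nbr (m : 'I_nt) (i j : 'I_nv) : option 'I_nt :=
  [pick m' | (m' != m) && tri_has m' i && tri_has m' j].
Definition interior_edge (m : 'I_nt) (i j : 'I_nv) : bool := nbr m i j.
Definition opp (m' : 'I_nt) (i j : 'I_nv) : 'I_nv :=
  odflt i [pick k | tri_has m' k && (k != i) && (k != j)].

Definition every_tri_has_interior_edge : Prop :=
  forall m, [|| interior_edge m (tri m i0) (tri m i1),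
                interior_edge m (tri m i1) (tri m i2) |
                interior_edge m (tri m i2) (tri m i0)].

Section Construction.
Variable Q : 'I_nv -> poly2.

Definition pv (u : 'I_nv) : R := evalp (Q u) (vert u).
Definition pe (u w : 'I_nv) : R :=
  evalp (Q u) (2/3 * (vert u).1 + 1/3 * (vert w).1, 2/3 * (vert u).2 + 1/3 * (vert w).2).

Definition Gamma (m : 'I_nt) (i j k : 'I_nv) : R :=
  match nbr m i j with
  | Some m' =>
    let k' := opp m' i j in
    let '(a0, a1, a2) := bary (vert i) (vert j) (vert k) (vert k') in
    (2 * a2 * (1 - a2))^-1 *
      (pe k' i + pe k' j - a0 ^+ 2 * (pv i + pe i j) - 2 * a0 * a1 * (pe i j + pe j i)
       - a1 ^+ 2 * (pe j i + pv j) - 2 * a0 * a2 * pe i k - 2 * a1 * a2 * pe j k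
       - a2 ^+ 2 * (pe k i + pe k j))
  | None => 0
  end.

Definition centroid_coef (m : 'I_nt) : R :=
  let a := tri m i0 in let b := tri m i1 in let c := tri m i2 in
  let ie := [seq e <- [:: (a, b, c); (b, c, a); (c, a, b)] | interior_edge m e.1.1 e.1.2] in
  (\sum_(e <- ie) Gamma m e.1.1 e.1.2 e.2) / (size ie)%:R.

Definition BBcoef (pc : R) (a b c : 'I_nv) (d0 d1 d2 : nat) : R :=
  match d0, d1, d2 with
  | 3, 0, 0 => pv a | 0, 3, 0 => pv b | 0, 0, 3 => pv c
  | 2, 1, 0 => pe a b | 1, 2, 0 => pe b a
  | 2, 0, 1 => pe a c | 1, 0, 2 => pe c a
  | 0, 2, 1 => pe b c | 0, 1, 2 => pe c b
  | _, _, _ => pc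
  end.

Definition spline : {ffun 'I_nt -> poly2} :=
  [ffun m => BBcubic (tv m i0) (tv m i1) (tv m i2)
               (BBcoef (centroid_coef m) (tri m i0) (tri m i1) (tri m i2))].
End Construction.

Definition inS2 (s : {ffun 'I_nt -> poly2}) : Prop :=
  exists Q : 'I_nv -> poly2, (forall i, inPd 1 (Q i)) /\ s = spline Q.

Definition C0cubic (s : {ffun 'I_nt -> poly2}) : Prop :=
  (forall m, inPd 3 (s m)) /\
  (forall m m' x, in_tri m x -> in_tri m' x -> evalp (s m) x = evalp (s m') x).

Definition has_dim (P : {ffun 'I_nt -> poly2} -> Prop) (n : nat) : Prop :=
  exists b : 'I_n -> {ffun 'I_nt -> poly2},
    [/\ forall k, P (b k),
        forall c : 'I_n -> R, \sum_(k < n) c k *: b k = 0 -> forall k, c k = 0 &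
        forall s, P s -> exists c : 'I_n -> R, s = \sum_(k < n) c k *: b k].

Definition taylor1 (P : poly2) (i : 'I_nv) : poly2 :=
  (evalp P (vert i))%:MP +
  \sum_(r < 2) (evalp (P^`M(r)) (vert i))%:MP * ('X_r - (coord (vert i) r)%:MP).

End Defs.

(* Main.v *)
Require Import Defs.
From HB Require Import structures.
From mathcomp Require Import all_boot all_order all_algebra.
From mathcomp Require Import mpoly.
From mathcomp Require Import ring lra.
From Stdlib Require Import FunctionalExtensionality.
Import Order.TTheory GRing.Theory Num.Theory.
Local Open Scope ring_scope.
Set Implicit Arguments.
Unset Strict Implicit.
Unset Printing Implicit Defensive.
Section S.
Variable R : realFieldType.
Local Notation point := (R * R)%type.
Local Notation poly2 := {mpoly R[2]}.

Definition o0 : 'I_2 := @Ordinal 2 0 isT.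
Definition o1 : 'I_2 := @Ordinal 2 1 isT.

Lemma ord2P (r : 'I_2) : r = o0 \/ r = o1.
Proof. case: r => [[|[|?]] H]; [left|right|by []]; exact: val_inj. Qed.

Lemma ord3P (p : 'I_3) : p = i0 \/ p = i1 \/ p = i2.
Proof. case: p => [[|[|[|?]]] H]; [left|right;left|right;right|by []]; exact: val_inj. Qed.

Definition aff (k a b : R) : poly2 := k%:MP + a *: 'X_o0 + b *: 'X_o1.
Definition sel (r : 'I_2) (a b : R) : R := if val r == 0%N then a else b.

Lemma ev_aff k a b x : evalp (aff k a b) x = k + a * x.1 + b * x.2.
Proof. by rewrite /evalp /aff !mevalD !mevalZ mevalC !mevalXU. Qed.

Lemma mderivXU (i r : 'I_2) : ('X_i : poly2)^`M(r) = ((i == r)%:R)%:MP.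
Proof.
rewrite mderivX mnm1E; case: eqP => [->|_].
  have -> : (U_(r) - U_(r))%MM = 0%MM by apply/mnmP => j; rewrite mnmBE subnn mnm0E.
  by rewrite mpolyX0 scale1r mpolyC1.
by rewrite scale0r mpolyC0.
Qed.

Lemma dv_aff k a b r x : evalp ((aff k a b)^`M(r)) x = sel r a b.
Proof.
rewrite /evalp /aff !mderivD !mderivZ mderivC !mderivXU !mevalD !mevalZ !mevalC.
by case: (ord2P r) => ->; rewrite /sel /= ?eqxx; ring.
Qed.

Lemma evD (f g : poly2) x : evalp (f + g) x = evalp f x + evalp g x.
Proof. exact: mevalD. Qed.
Lemma evB (f g : poly2) x : evalp (f - g) x = evalp f x - evalp g x.
Proof. exact: mevalB. Qed.
Lemma evM (f g : poly2) x : evalp (f * g) x = evalp f x * evalp g x.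
Proof. exact: mevalM. Qed.
Lemma evZ a (f : poly2) x : evalp (a *: f) x = a * evalp f x.
Proof. exact: mevalZ. Qed.
Lemma evC (a : R) x : evalp a%:MP x = a.
Proof. exact: mevalC. Qed.
Lemma ev0 (x : point) : evalp (0 : poly2) x = 0.
Proof. exact: meval0. Qed.

Definition dv (r : 'I_2) (f : poly2) x := evalp (f^`M(r)) x.
Lemma dvD r f g x : dv r (f + g) x = dv r f x + dv r g x.
Proof. by rewrite /dv mderivD evD. Qed.
Lemma dvB r f g x : dv r (f - g) x = dv r f x - dv r g x.
Proof. by rewrite /dv mderivB evB. Qed.
Lemma dvM r f g x : dv r (f * g) x = dv r f x * evalp g x + evalp f x * dv r g x.
Proof. by rewrite /dv mderivM evD !evM. Qed.
Lemma dvZ r a f x : dv r (a *: f) x = a * dv r f x.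
Proof. by rewrite /dv mderivZ evZ. Qed.
Lemma dvC r (a : R) x : dv r a%:MP x = 0.
Proof. by rewrite /dv mderivC ev0. Qed.
Lemma dv0 r (x : point) : dv r (0 : poly2) x = 0.
Proof. by rewrite /dv mderiv0 ev0. Qed.

Lemma msize_aff k a b : (msize (aff k a b) <= 2)%N.
Proof.
rewrite /aff; apply: leq_trans (msizeD_le _ _) _; rewrite geq_max.
apply/andP; split; last by apply: leq_trans (msizeZ_le _ _) _; rewrite msizeX mdeg1.
apply: leq_trans (msizeD_le _ _) _; rewrite geq_max; apply/andP; split.
  by rewrite msizeC; case: (_ != 0).
by apply: leq_trans (msizeZ_le _ _) _; rewrite msizeX mdeg1.
Qed.

Lemma aff_lin (a : R) k1 a1 b1 k2 a2 b2 :
  a *: aff k1 a1 b1 + aff k2 a2 b2 = aff (a * k1 + k2) (a * a1 + a2) (a * b1 + b2).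
Proof. rewrite /aff -!mul_mpolyC !raddfD /= !rmorphM /=; ring. Qed.

End S.
Section S2.
Variable R : realFieldType.
Local Notation point := (R * R)%type.
Local Notation poly2 := {mpoly R[2]}.

Lemma sum10 (V : nmodType) (F : nat -> nat -> V) :
  \sum_(d0 < 4) \sum_(d1 < 4 - d0) F d0 d1 =
  F 0 0 + F 0 1 + F 0 2 + F 0 3 + F 1 0 + F 1 1 + F 1 2 + F 2 0 + F 2 1 + F 3 0.
Proof.
rewrite (@big_ord_recl _ _ _ 3) (@big_ord_recl _ _ _ 2) (@big_ord_recl _ _ _ 1)
  (@big_ord_recl _ _ _ 0) big_ord0 /= /bump /=.
rewrite (@big_ord_recl _ _ _ 3) (@big_ord_recl _ _ _ 2) (@big_ord_recl _ _ _ 1)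
  (@big_ord_recl _ _ _ 0) big_ord0 /= /bump /=.
rewrite (@big_ord_recl _ _ _ 2) (@big_ord_recl _ _ _ 1)
  (@big_ord_recl _ _ _ 0) big_ord0 /= /bump /=.
rewrite (@big_ord_recl _ _ _ 1) (@big_ord_recl _ _ _ 0) big_ord0 /= /bump /=.
rewrite (@big_ord_recl _ _ _ 0) big_ord0 /= /bump /=.
by rewrite !addr0 !addrA.
Qed.
End S2.
Section S3.
Variable R : realFieldType.
Local Notation point := (R * R)%type.
Local Notation poly2 := {mpoly R[2]}.

Definition baff (a b : point) (A : R) : poly2 :=
  aff (area2 (0,0) a b / A) ((a.2 - b.2) / A) ((b.1 - a.1) / A).

Lemma baryPE (u0 u1 u2 : point) : baryP u0 u1 u2 =
  (baff u1 u2 (area2 u0 u1 u2), baff u2 u0 (area2 u0 u1 u2), baff u0 u1 (area2 u0 u1 u2)).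
Proof.
rewrite /baryP /baff /aff /area2 /Xpt /Cpt /=.
congr (_,_,_); rewrite -!mul_mpolyC; ring.
Qed.

Definition BBpoly (c : nat -> nat -> nat -> R) (t0 t1 t2 : poly2) : poly2 :=
 c 3%N 0%N 0%N *: (t0*t0*t0) + (3 * c 2%N 1%N 0%N) *: (t0*t0*t1) + (3 * c 2%N 0%N 1%N) *: (t0*t0*t2)
 + (3 * c 1%N 2%N 0%N) *: (t0*t1*t1) + (6 * c 1%N 1%N 1%N) *: (t0*t1*t2) + (3 * c 1%N 0%N 2%N) *: (t0*t2*t2)
 + c 0%N 3%N 0%N *: (t1*t1*t1) + (3 * c 0%N 2%N 1%N) *: (t1*t1*t2) + (3 * c 0%N 1%N 2%N) *: (t1*t2*t2)
 + c 0%N 0%N 3%N *: (t2*t2*t2).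

Lemma r66 : 6%:R / 6%:R = 1 :> R.
Proof. by rewrite divff // pnatr_eq0. Qed.
Lemma r62 : 6%:R / 2%:R = 3%:R :> R.
Proof. by apply: (canLR (mulfK _)); rewrite ?pnatr_eq0 // -natrM. Qed.
Lemma r61 : 6%:R / 1%:R = 6%:R :> R.
Proof. by rewrite divr1. Qed.

Definition bbterm (c : nat -> nat -> nat -> R) (t0 t1 t2 : poly2) (d0 d1 : nat) : poly2 :=
  (c d0 d1 (3 - d0 - d1)%N * ((3`!)%:R / (d0`! * d1`! * (3 - d0 - d1)`!)%:R))
       *: (t0 ^+ d0 * t1 ^+ d1 * t2 ^+ (3 - d0 - d1)).

Lemma BBE (u0 u1 u2 : point) c : BBcubic u0 u1 u2 c =
  BBpoly c (baff u1 u2 (area2 u0 u1 u2)) (baff u2 u0 (area2 u0 u1 u2))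
           (baff u0 u1 (area2 u0 u1 u2)).
Proof.
rewrite /BBcubic baryPE /=.
set t0 := baff u1 u2 _; set t1 := baff u2 u0 _; set t2 := baff u0 u1 _.
change (\sum_(d0 < 4) \sum_(d1 < 4 - d0) bbterm c t0 t1 t2 d0 d1 = BBpoly c t0 t1 t2).
rewrite sum10 /bbterm !subnE /= !factE /= !mulnE /= r66 r62 r61 /BBpoly -!mul_mpolyC.
ring.
Qed.
End S3.
Section S4.
Variable R : realFieldType.
Local Notation point := (R * R)%type.
Local Notation poly2 := {mpoly R[2]}.
Implicit Types (c : nat -> nat -> nat -> R).

Definition bbval c (b0 b1 b2 : R) : R :=
 c 3%N 0%N 0%N * (b0*b0*b0) + (3 * c 2%N 1%N 0%N) * (b0*b0*b1) + (3 * c 2%N 0%N 1%N) * (b0*b0*b2)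
 + (3 * c 1%N 2%N 0%N) * (b0*b1*b1) + (6 * c 1%N 1%N 1%N) * (b0*b1*b2) + (3 * c 1%N 0%N 2%N) * (b0*b2*b2)
 + c 0%N 3%N 0%N * (b1*b1*b1) + (3 * c 0%N 2%N 1%N) * (b1*b1*b2) + (3 * c 0%N 1%N 2%N) * (b1*b2*b2)
 + c 0%N 0%N 3%N * (b2*b2*b2).
Definition bbd0 c (b0 b1 b2 : R) : R :=
 3 * c 3%N 0%N 0%N * (b0*b0) + 6 * c 2%N 1%N 0%N * (b0*b1) + 6 * c 2%N 0%N 1%N * (b0*b2)
 + 3 * c 1%N 2%N 0%N * (b1*b1) + 6 * c 1%N 1%N 1%N * (b1*b2) + 3 * c 1%N 0%N 2%N * (b2*b2).
Definition bbd1 c (b0 b1 b2 : R) : R :=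
 3 * c 2%N 1%N 0%N * (b0*b0) + 6 * c 1%N 2%N 0%N * (b0*b1) + 6 * c 1%N 1%N 1%N * (b0*b2)
 + 3 * c 0%N 3%N 0%N * (b1*b1) + 6 * c 0%N 2%N 1%N * (b1*b2) + 3 * c 0%N 1%N 2%N * (b2*b2).
Definition bbd2 c (b0 b1 b2 : R) : R :=
 3 * c 2%N 0%N 1%N * (b0*b0) + 6 * c 1%N 1%N 1%N * (b0*b1) + 6 * c 1%N 0%N 2%N * (b0*b2)
 + 3 * c 0%N 2%N 1%N * (b1*b1) + 6 * c 0%N 1%N 2%N * (b1*b2) + 3 * c 0%N 0%N 3%N * (b2*b2).
Definition blos c (b0 b1 b2 z0 z1 z2 : R) : R :=
  bbval c b0 b1 b2 + (bbd0 c b0 b1 b2 * (z0 - b0) + bbd1 c b0 b1 b2 * (z1 - b1)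
                      + bbd2 c b0 b1 b2 * (z2 - b2)) / 3.

Lemma GammaId0 c b0 b1 b2 : b0 + b1 + b2 = 1 -> b2 != 0 -> 1 - b2 != 0 ->
 (2 * b2 * (1 - b2))^-1 * (blos c b0 b1 b2 1 0 0 + blos c b0 b1 b2 0 1 0
   - b0 ^+ 2 * (c 3%N 0%N 0%N + c 2%N 1%N 0%N) - 2 * b0 * b1 * (c 2%N 1%N 0%N + c 1%N 2%N 0%N)
   - b1 ^+ 2 * (c 1%N 2%N 0%N + c 0%N 3%N 0%N) - 2 * b0 * b2 * c 2%N 0%N 1%N - 2 * b1 * b2 * c 0%N 2%N 1%N
   - b2 ^+ 2 * (c 1%N 0%N 2%N + c 0%N 1%N 2%N)) = c 1%N 1%N 1%N.
Proof.
move=> hs h2 h2'.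
have -> : b0 = 1 - b1 - b2 by rewrite -hs; ring.
rewrite /blos /bbval /bbd0 /bbd1 /bbd2.
field. by rewrite h2 h2'.
Qed.
End S4.
Section S5.
Variable R : realFieldType.
Local Notation point := (R * R)%type.
Local Notation poly2 := {mpoly R[2]}.
Implicit Types (c : nat -> nat -> nat -> R).

Lemma ev_BBpoly c (t0 t1 t2 : poly2) x : evalp (BBpoly c t0 t1 t2) x =
  bbval c (evalp t0 x) (evalp t1 x) (evalp t2 x).
Proof. rewrite /BBpoly !evD !evZ !evM /bbval; ring. Qed.

Lemma dv_BBpoly c (t0 t1 t2 : poly2) r x : dv r (BBpoly c t0 t1 t2) x =
  bbd0 c (evalp t0 x) (evalp t1 x) (evalp t2 x) * dv r t0 x
  + bbd1 c (evalp t0 x) (evalp t1 x) (evalp t2 x) * dv r t1 x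
  + bbd2 c (evalp t0 x) (evalp t1 x) (evalp t2 x) * dv r t2 x.
Proof. rewrite /BBpoly !dvD !dvZ !dvM /bbd0 /bbd1 /bbd2; ring. Qed.

Lemma ev_baff (a b : point) A x : evalp (baff a b A) x = area2 x a b / A.
Proof. rewrite /baff ev_aff /area2 /=; ring. Qed.

Lemma dv_baff (a b : point) A r x :
  dv r (baff a b A) x = sel r ((a.2 - b.2) / A) ((b.1 - a.1) / A).
Proof. exact: dv_aff. Qed.

Lemma evBB (u0 u1 u2 : point) c x :
  evalp (BBcubic u0 u1 u2 c) x =
  bbval c (area2 x u1 u2 / area2 u0 u1 u2) (area2 x u2 u0 / area2 u0 u1 u2)
          (area2 x u0 u1 / area2 u0 u1 u2).
Proof. by rewrite BBE ev_BBpoly !ev_baff. Qed.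

Definition gr (a b : point) (A : R) (r : 'I_2) := sel r ((a.2 - b.2) / A) ((b.1 - a.1) / A).

Lemma dvBB (u0 u1 u2 : point) c r x :
  let A := area2 u0 u1 u2 in
  let b0 := area2 x u1 u2 / A in let b1 := area2 x u2 u0 / A in
  let b2 := area2 x u0 u1 / A in
  dv r (BBcubic u0 u1 u2 c) x =
  bbd0 c b0 b1 b2 * gr u1 u2 A r + bbd1 c b0 b1 b2 * gr u2 u0 A r
  + bbd2 c b0 b1 b2 * gr u0 u1 A r.
Proof. by rewrite BBE dv_BBpoly !ev_baff !dv_baff. Qed.

Lemma msizeM_le' (p q : poly2) : (msize (p * q) <= (msize p + msize q).-1)%N.
Proof.
have [->|nz_p] := eqVneq p 0; first by rewrite mul0r msize0.
have [->|nz_q] := eqVneq q 0; first by rewrite mulr0 msize0.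
by rewrite msizeM.
Qed.

Lemma msize_cube (t0 t1 t2 : poly2) : (msize t0 <= 2)%N -> (msize t1 <= 2)%N ->
  (msize t2 <= 2)%N -> (msize (t0 * t1 * t2) <= 4)%N.
Proof.
move=> h0 h1 h2; apply: leq_trans (msizeM_le' _ _) _.
have h01 : (msize (t0 * t1) <= 3)%N.
  apply: leq_trans (msizeM_le' _ _) _.
  by rewrite -subn1 leq_subLR; apply: leq_trans (leq_add h0 h1) _.
by rewrite -subn1 leq_subLR; apply: leq_trans (leq_add h01 h2) _.
Qed.

Lemma msize_BBpoly c (t0 t1 t2 : poly2) : (msize t0 <= 2)%N -> (msize t1 <= 2)%N ->
  (msize t2 <= 2)%N -> (msize (BBpoly c t0 t1 t2) <= 4)%N.
Proof.
move=> h0 h1 h2.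
have HsZ : forall a (p : poly2), (msize p <= 4)%N -> (msize (a *: p) <= 4)%N.
  by move=> a p hp; apply: leq_trans (msizeZ_le _ _) hp.
have HsD : forall (p q : poly2), (msize p <= 4)%N -> (msize q <= 4)%N -> (msize (p + q) <= 4)%N.
  by move=> p q hp hq; apply: leq_trans (msizeD_le _ _) _; rewrite geq_max hp hq.
rewrite /BBpoly.
apply: (HsD); last by apply: (HsZ); apply: msize_cube.
apply: (HsD); last by apply: (HsZ); apply: msize_cube.
apply: (HsD); last by apply: (HsZ); apply: msize_cube.
apply: (HsD); last by apply: (HsZ); apply: msize_cube.
apply: (HsD); last by apply: (HsZ); apply: msize_cube.
apply: (HsD); last by apply: (HsZ); apply: msize_cube.
apply: (HsD); last by apply: (HsZ); apply: msize_cube.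
apply: (HsD); last by apply: (HsZ); apply: msize_cube.
apply: (HsD); last by apply: (HsZ); apply: msize_cube.

by apply: (HsZ); apply: msize_cube.
Qed.

Lemma msize_baff (a b : point) A : (msize (baff a b A) <= 2)%N.
Proof. exact: msize_aff. Qed.

Lemma inPd3_BB (u0 u1 u2 : point) c : inPd 3 (BBcubic u0 u1 u2 c).
Proof. by rewrite /inPd BBE; apply: msize_BBpoly; apply: msize_baff. Qed.

Lemma BBpoly_lin a c1 c2 (t0 t1 t2 : poly2) :
  BBpoly (fun d0 d1 d2 => a * c1 d0 d1 d2 + c2 d0 d1 d2) t0 t1 t2 =
  a *: BBpoly c1 t0 t1 t2 + BBpoly c2 t0 t1 t2.
Proof. rewrite /BBpoly -!mul_mpolyC; ring. Qed.

End S5.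
Section S6.
Variable R : realFieldType.
Local Notation point := (R * R)%type.
Local Notation poly2 := {mpoly R[2]}.

Lemma affP (Q : poly2) : (msize Q <= 2)%N ->
  Q = aff (Q@_0%MM) (Q@_(U_(o0))%MM) (Q@_(U_(o1))%MM).
Proof.
move=> hQ; apply/mpolyP => m.
rewrite /aff !mcoeffD mcoeffC !mcoeffZ !mcoeffX.
have [->|mnz] := eqVneq m 0%MM.
  by rewrite !mnm1_eq0 /=; ring.
case: (boolP (mdeg m == 1%N)) => [/mdeg1P [j /eqP ->]|md1].
  rewrite !eq_mnm1 /=.
  by case: (ord2P j) => ->; rewrite /o0 /o1 /=; ring.
have hm : (2 <= mdeg m)%N.
  move: md1 (mdeg_eq0 m); rewrite (negbTE mnz); by case: (mdeg m) => [|[|k]].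
have /negbTE h : m \notin msupp Q by apply: msize_mdeg_ge; apply: leq_trans hQ hm.
have : Q@_m == 0 by rewrite mcoeff_eq0 h.
move/eqP => ->.
have n0 : (0%MM == m) = false by rewrite eq_sym; apply/negbTE.
have nj : forall j : 'I_2, (U_(j)%MM == m) = false.
  by move=> j; apply/negbTE; apply/eqP => e; move: hm; rewrite -e mdeg1.
rewrite !nj.
by rewrite !mulr0 !addr0.
Qed.

Lemma inPd1_aff k a b : inPd 1 (aff k a b :> poly2).
Proof. exact: msize_aff. Qed.

End S6.
Section Main.
Variables (R : realFieldType) (nv nt : nat) (vert : 'I_nv -> R * R)
  (tri : 'I_nt -> 'I_3 -> 'I_nv).
Local Notation point := (R * R)%type.
Local Notation poly2 := {mpoly R[2]}.

Definition QA (k a b : 'I_nv -> R) : 'I_nv -> poly2 := fun u => aff (k u) (a u) (b u).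

Lemma QAP (Q : 'I_nv -> poly2) : (forall i, inPd 1 (Q i)) ->
  Q = QA (fun u => (Q u)@_0%MM) (fun u => (Q u)@_(U_(o0))%MM) (fun u => (Q u)@_(U_(o1))%MM).
Proof. move=> HQ; apply: functional_extensionality => u; rewrite /QA; apply: affP; exact: HQ. Qed.

Lemma pvQA k a b u : pv vert (QA k a b) u = k u + a u * (vert u).1 + b u * (vert u).2.
Proof. by rewrite /pv ev_aff. Qed.

Lemma peQA k a b u w : pe vert (QA k a b) u w =
  k u + a u * (2/3 * (vert u).1 + 1/3 * (vert w).1) + b u * (2/3 * (vert u).2 + 1/3 * (vert w).2).
Proof. by rewrite /pe ev_aff. Qed.

Lemma splineE Q m : spline vert tri Q m =
  BBcubic (vert (tri m i0)) (vert (tri m i1)) (vert (tri m i2))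
    (BBcoef vert Q (centroid_coef vert tri Q m) (tri m i0) (tri m i1) (tri m i2)).
Proof. by rewrite /spline ffunE. Qed.

Lemma spline_vertex k a b m p (hA : area2 (vert (tri m i0)) (vert (tri m i1)) (vert (tri m i2)) != 0) :
  evalp (spline vert tri (QA k a b) m) (vert (tri m p)) = k (tri m p) + a (tri m p) * (vert (tri m p)).1 + b (tri m p) * (vert (tri m p)).2 /\
  forall r, dv r (spline vert tri (QA k a b) m) (vert (tri m p)) = sel r (a (tri m p)) (b (tri m p)).
Proof.
rewrite splineE; split; [|move=> r].
  rewrite evBB; move: hA.
  case: (ord3P p) => [->|[->|->]]; rewrite /bbval /= !pvQA !peQA /area2 => hA; field; exact: hA.
rewrite dvBB /gr; move: hA.
case: (ord3P p) => [->|[->|->]]; rewrite /bbd0 /bbd1 /bbd2 /= !pvQA !peQA;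
  case: (ord2P r) => [->|->] /=; rewrite /sel /= /area2 => hA; field; exact: hA.
Qed.
End Main.
Section Lin.
Variables (R : realFieldType) (nv nt : nat) (vert : 'I_nv -> R * R)
  (tri : 'I_nt -> 'I_3 -> 'I_nv).
Local Notation point := (R * R)%type.
Local Notation poly2 := {mpoly R[2]}.
Variables (a : R) (Q1 Q2 : 'I_nv -> poly2).
Let Ql := fun i => a *: Q1 i + Q2 i.

Lemma pv_lin u : pv vert Ql u = a * pv vert Q1 u + pv vert Q2 u.
Proof. by rewrite /pv /Ql evD evZ. Qed.
Lemma pe_lin u w : pe vert Ql u w = a * pe vert Q1 u w + pe vert Q2 u w.
Proof. by rewrite /pe /Ql evD evZ. Qed.

Lemma Gamma_lin m i j k : Gamma vert tri Ql m i j k =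
  a * Gamma vert tri Q1 m i j k + Gamma vert tri Q2 m i j k.
Proof.
rewrite /Gamma; case: (nbr tri m i j) => [m'|]; last by rewrite mulr0 addr0.
rewrite /bary !pv_lin !pe_lin; ring.
Qed.

Lemma centroid_lin m : centroid_coef vert tri Ql m =
  a * centroid_coef vert tri Q1 m + centroid_coef vert tri Q2 m.
Proof.
rewrite /centroid_coef.
set s := [seq e <- _ | _].
under eq_bigr => e _ do rewrite Gamma_lin.
by rewrite big_split /= -mulr_sumr mulrDl mulrA.
Qed.

Lemma spline_lin : spline vert tri Ql = a *: spline vert tri Q1 + spline vert tri Q2.
Proof.
apply/ffunP => m; rewrite /spline !ffunE !BBE /BBpoly /= !pv_lin !pe_lin centroid_lin.
rewrite -!mul_mpolyC; ring.
Qed.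
End Lin.

Lemma spline_linE (R : realFieldType) (nv nt : nat) (vert : 'I_nv -> R * R)
  (tri : 'I_nt -> 'I_3 -> 'I_nv) a (Q1 Q2 : 'I_nv -> {mpoly R[2]}) :
  spline vert tri (fun i => a *: Q1 i + Q2 i) = a *: spline vert tri Q1 + spline vert tri Q2.
Proof. exact: spline_lin. Qed.
Section C0.
Variables (R : realFieldType) (nv nt : nat) (vert : 'I_nv -> R * R)
  (tri : 'I_nt -> 'I_3 -> 'I_nv).
Local Notation point := (R * R)%type.
Local Notation poly2 := {mpoly R[2]}.

Definition bern (l w0 w1 w2 w3 : R) : R :=
  (1 - l) * (1 - l) * (1 - l) * w0 + 3 * ((1 - l) * (1 - l) * l) * w1
  + 3 * ((1 - l) * l * l) * w2 + l * l * l * w3.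

Lemma spline_edge (Q : 'I_nv -> poly2) m p q i j l
  (hA : area2 (vert (tri m i0)) (vert (tri m i1)) (vert (tri m i2)) != 0) :
  tri m p = i -> tri m q = j -> p != q ->
  evalp (spline vert tri Q m) ((1 - l) * (vert i).1 + l * (vert j).1,
                               (1 - l) * (vert i).2 + l * (vert j).2) =
  bern l (pv vert Q i) (pe vert Q i j) (pe vert Q j i) (pv vert Q j).
Proof.
move=> <- <-; rewrite splineE evBB; move: hA.
case: (ord3P p) => [->|[->|->]]; case: (ord3P q) => [->|[->|->]] //=;
  rewrite /bbval /bern /= /area2 /= => hA hpq; (try by rewrite eqxx in hpq); field; exact: hA.
Qed.

Lemma spline_vval (Q : 'I_nv -> poly2) m p
  (hA : area2 (vert (tri m i0)) (vert (tri m i1)) (vert (tri m i2)) != 0) :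
  evalp (spline vert tri Q m) (vert (tri m p)) = pv vert Q (tri m p).
Proof.
rewrite splineE evBB; move: hA.
case: (ord3P p) => [->|[->|->]]; rewrite /bbval /= /area2 => hA; field; exact: hA.
Qed.

Lemma tri_hasP m i : tri_has tri m i -> exists p, tri m p = i.
Proof. by move=> /existsP [p /eqP <-]; exists p. Qed.

Lemma spline_C0 (Q : 'I_nv -> poly2) : is_triangulation vert tri ->
  forall m m' x, in_tri vert tri m x -> in_tri vert tri m' x ->
  evalp (spline vert tri Q m) x = evalp (spline vert tri Q m') x.
Proof.
case=> _ HA _ Hc _ m m' x hm hm'.
have [<-|nmm] := eqVneq m m'; first by [].
case: (Hc m m' nmm) => [H0|[[i [hi hi' Hx]]|[i [j [nij /andP [hi hj] /andP [hi' hj'] Hx]]]]].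
- by case: (H0 x).
- rewrite (Hx x hm hm').
  case: (tri_hasP hi) => p hp; case: (tri_hasP hi') => p' hp'.
  by rewrite -{1}hp -hp' !spline_vval ?hp ?hp' //; apply: HA.
- case: (Hx x hm hm') => l [_ _ ->].
  case: (tri_hasP hi) => p hp; case: (tri_hasP hj) => q hq.
  case: (tri_hasP hi') => p' hp'; case: (tri_hasP hj') => q' hq'.
  have npq : p != q by apply: contraNneq nij => e; rewrite -hp -hq e.
  have npq' : p' != q' by apply: contraNneq nij => e; rewrite -hp' -hq' e.
  by rewrite (spline_edge _ _ _ hp hq npq) ?(spline_edge _ _ _ hp' hq' npq') //; apply: HA.
Qed.
End C0.
Section Geo1.
Variable R : realFieldType.
Local Notation point := (R * R)%type.

Lemma sum3_perm (f : 'I_3 -> R) p q s : p != q -> q != s -> p != s ->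
  f i0 + f i1 + f i2 = f p + f q + f s.
Proof.
case: (ord3P p) => [->|[->|->]]; case: (ord3P q) => [->|[->|->]];
  case: (ord3P s) => [->|[->|->]] //= _ _ _; ring.
Qed.

Definition third (p q : 'I_3) : 'I_3 := odflt i0 [pick t | (t != p) && (t != q)].

Lemma thirdP p q : p != q -> third p q != p /\ third p q != q.
Proof.
move=> npq; rewrite /third; case: pickP => [t /andP [h1 h2] //|H] /=.
exfalso; move: npq H.
case: (ord3P p) => [->|[->|->]]; case: (ord3P q) => [->|[->|->]] //= _ H.
- by move: (H i2). - by move: (H i1). - by move: (H i2).
- by move: (H i0). - by move: (H i1). - by move: (H i0).
Qed.

Lemma perm_area (u : 'I_3 -> point) p q s : p != q -> q != s -> p != s ->
  area2 (u p) (u q) (u s) = area2 (u i0) (u i1) (u i2) \/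
  area2 (u p) (u q) (u s) = - area2 (u i0) (u i1) (u i2).
Proof.
case: (ord3P p) => [->|[->|->]]; case: (ord3P q) => [->|[->|->]];
  case: (ord3P s) => [->|[->|->]] //= _ _ _; rewrite /area2;
  solve [left; ring | right; ring].
Qed.

Lemma perm_area_neq0 (u : 'I_3 -> point) p q s : p != q -> q != s -> p != s ->
  area2 (u i0) (u i1) (u i2) != 0 -> area2 (u p) (u q) (u s) != 0.
Proof.
move=> h1 h2 h3 hA; case: (perm_area u h1 h2 h3) => ->; by rewrite ?oppr_eq0.
Qed.

Lemma area_inj (u : 'I_3 -> point) p q : area2 (u i0) (u i1) (u i2) != 0 ->
  u p = u q -> p = q.
Proof.
move=> hA; case: (ord3P p) => [->|[->|->]]; case: (ord3P q) => [->|[->|->]] //= e;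
  by move: hA; rewrite /area2 e; set z := _ - _ ; rewrite (_ : z = 0) ?eqxx //; rewrite /z; ring.
Qed.
End Geo1.
Section Geo2.
Variable R : realFieldType.
Local Notation point := (R * R)%type.

Lemma key_geom (U0 U1 U2 W : point) : area2 U0 U1 U2 != 0 ->
  area2 U0 U1 W = area2 U0 U1 U2 ->
  exists eps mu0 mu1 : R, [/\ 0 < eps, eps < 1, 0 <= mu0, 0 <= mu1 &
   mu0 + mu1 + eps = 1] /\
   ((1-eps)/2 * U0.1 + (1-eps)/2 * U1.1 + eps * U2.1 = mu0 * U0.1 + mu1 * U1.1 + eps * W.1 /\
   (1-eps)/2 * U0.2 + (1-eps)/2 * U1.2 + eps * U2.2 = mu0 * U0.2 + mu1 * U1.2 + eps * W.2).
Proof.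
move=> hD E.
set D := area2 U0 U1 U2 in hD E.
set a := area2 U2 U1 W.
have cs : area2 U0 U2 W = - a.
  have : area2 U2 U1 W + area2 U0 U2 W + area2 U0 U1 U2 = area2 U0 U1 W by rewrite /area2; ring.
  rewrite E -/D -/a => h; apply/eqP; rewrite -(subr_eq0) opprK; apply/eqP.
  by rewrite -[RHS](subrr D) -{1}h; ring.
have cr1 : area2 U0 U1 W * U2.1 = area2 U2 U1 W * U0.1 + area2 U0 U2 W * U1.1 + area2 U0 U1 U2 * W.1.
  by rewrite /area2; ring.
have cr2 : area2 U0 U1 W * U2.2 = area2 U2 U1 W * U0.2 + area2 U0 U2 W * U1.2 + area2 U0 U1 U2 * W.2.
  by rewrite /area2; ring.
rewrite E cs -/D -/a in cr1 cr2.
set b := a / D.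
have e1 : U2.1 = b * U0.1 - b * U1.1 + W.1.
  by apply: (mulfI hD); rewrite cr1 /b; field.
have e2 : U2.2 = b * U0.2 - b * U1.2 + W.2.
  by apply: (mulfI hD); rewrite cr2 /b; field.
set k := `|b|.
have k0 : 0 <= k by apply: normr_ge0.
have kb : - k <= b <= k by rewrite -ler_norml.
case/andP: kb => kb1 kb2.
have hk : 0 < 2 + 2 * k by lra.
set eps := (2 + 2 * k)^-1.
have he : eps * (2 + 2 * k) = 1 by rewrite mulVf // gt_eqF.
have ep : 0 < eps by rewrite invr_gt0.
exists eps, ((1 - eps)/2 + eps * b), ((1 - eps)/2 - eps * b).
split; [split|split].
- exact: ep.
- nra.
- nra.
- nra.
- by field; rewrite ?pnatr_eq0.
- rewrite e1; ring.
- rewrite e2; ring.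
Qed.
End Geo2.
Section Geo3.
Variables (R : realFieldType) (nv nt : nat) (vert : 'I_nv -> R * R)
  (tri : 'I_nt -> 'I_3 -> 'I_nv).
Local Notation point := (R * R)%type.
Hypothesis HT : is_triangulation vert tri.

Let u m t := vert (tri m t).

Lemma HA m : area2 (u m i0) (u m i1) (u m i2) != 0.
Proof. by case: HT => _ HA _ _ _; apply: HA. Qed.

Lemma tri_inj m p q : tri m p = tri m q -> p = q.
Proof. move=> e; apply: (area_inj (u := u m) (HA m)); by rewrite /u e. Qed.

Lemma tri_neq m p q : p != q -> tri m p != tri m q.
Proof. by apply: contraNneq => e; rewrite (tri_inj e). Qed.

Lemma nbrP m i j m' : nbr tri m i j = Some m' ->
  [/\ m' != m, tri_has tri m' i & tri_has tri m' j].
Proof. by rewrite /nbr; case: pickP => // m'' /andP [/andP [h1 h2] h3] [<-]. Qed.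

Lemma oppP m' i j : tri_has tri m' i -> tri_has tri m' j -> i != j ->
  [/\ tri_has tri m' (Defs.opp tri m' i j), Defs.opp tri m' i j != i &
      Defs.opp tri m' i j != j].
Proof.
move=> hi hj nij.
case: (tri_hasP hi) => p hp; case: (tri_hasP hj) => q hq.
have npq : p != q by apply: contraNneq nij => e; rewrite -hp -hq e.
case: (thirdP npq) => h1 h2.
rewrite /Defs.opp; case: pickP => [k /andP [/andP [? ?] ?] //|H].
exfalso; move: (H (tri m' (third p q))).
rewrite /tri_has; have -> : [exists k, tri m' k == tri m' (third p q)].
  by apply/existsP; exists (third p q).
rewrite -hp -hq /=.
by rewrite (tri_neq _ h1) (tri_neq _ h2).
Qed.

Definition wsum (m : 'I_nt) (w : 'I_3 -> R) : point :=
  (w i0 * (u m i0).1 + w i1 * (u m i1).1 + w i2 * (u m i2).1,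
   w i0 * (u m i0).2 + w i1 * (u m i1).2 + w i2 * (u m i2).2).

Lemma in_tri_w m w : (forall t, 0 <= w t) -> w i0 + w i1 + w i2 = 1 ->
  in_tri vert tri m (wsum m w).
Proof. by move=> h0 h1; exists (w i0), (w i1), (w i2). Qed.

Lemma in_tri_vertex m p : in_tri vert tri m (u m p).
Proof.
pose w t : R := (t == p)%:R.
have -> : u m p = wsum m w.
  rewrite /wsum /w; case: (ord3P p) => [->|[->|->]]; rewrite /= ?mul1r ?mul0r ?add0r ?addr0;
  by case: (u m _).
apply: in_tri_w => [t|]; first by rewrite /w ler0n.
by rewrite /w; case: (ord3P p) => [->|[->|->]] /=; ring.
Qed.

Lemma area_wsum m w a b : a != b -> w i0 + w i1 + w i2 = 1 ->
  area2 (u m a) (u m b) (wsum m w) = w (third a b) * area2 (u m a) (u m b) (u m (third a b)).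
Proof.
move=> nab hw; case: (thirdP nab); set c := third a b => nca ncb.
have nbc : b != c by rewrite eq_sym.
have nac : a != c by rewrite eq_sym.
have e1 := sum3_perm (fun t => w t * (u m t).1) nab nbc nac.
have e2 := sum3_perm (fun t => w t * (u m t).2) nab nbc nac.
have e3 := sum3_perm w nab nbc nac.
simpl in e1, e2; rewrite /wsum e1 e2.
have -> : w a = 1 - w b - w c by rewrite -hw e3; ring.
rewrite /area2 /=; ring.
Qed.

Lemma geom m p q m' : p != q -> nbr tri m (tri m p) (tri m q) = Some m' ->
  area2 (vert (tri m p)) (vert (tri m q)) (vert (Defs.opp tri m' (tri m p) (tri m q))) != 0 /\
  area2 (vert (tri m p)) (vert (tri m q)) (vert (Defs.opp tri m' (tri m p) (tri m q))) !=
  area2 (vert (tri m p)) (vert (tri m q)) (vert (tri m (third p q))).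
Proof.
move=> npq hn.
case: HT => Hinj _ _ Hc _.
case: (nbrP hn) => nmm hi hj.
set i := tri m p in hi hn *; set j := tri m q in hj hn *.
have nij : i != j by exact: tri_neq.
case: (oppP hi hj nij); set k' := Defs.opp _ _ _ _ => hk nki nkj.
case: (tri_hasP hi) => p' hp'; case: (tri_hasP hj) => q' hq'; case: (tri_hasP hk) => s' hs'.
have npq' : p' != q' by apply: contraNneq nij => e; rewrite -hp' -hq' e.
have nsp : p' != s' by apply: contraNneq nki => e; rewrite -hp' -hs' e.
have nqs : q' != s' by apply: contraNneq nkj => e; rewrite -hq' -hs' e.
have Wne : area2 (vert i) (vert j) (vert k') != 0.
  rewrite -hp' -hq' -hs'.
  have := (perm_area_neq0 (u := u m') npq' nqs nsp (HA m')).
  by rewrite /u.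
split => //.
set s := third p q; case: (thirdP npq); rewrite -/s => nsp0 nsq0.
have nqs0 : q != s by rewrite eq_sym.
have nps0 : p != s by rewrite eq_sym.
have Dne : area2 (vert i) (vert j) (vert (tri m s)) != 0.
  have := (perm_area_neq0 (u := u m) npq nqs0 nps0 (HA m)).
  by rewrite /u.
apply/eqP => E.
case: (key_geom Dne E) => eps [mu0 [mu1 [[ep e1 m0 m1 hs] [x1 x2]]]].
pose w t : R := if t == s then eps else (1 - eps) / 2.
have wpos : forall t, 0 < w t.
  move=> t; rewrite /w; case: (t == s) => //; apply: divr_gt0; lra.
have ws : w i0 + w i1 + w i2 = 1.
  rewrite (sum3_perm w npq nqs0 nps0).
  by rewrite /w eqxx (negbTE nps0) (negbTE nqs0); field.
have ns'p : s' != p' by rewrite eq_sym.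
have ns'q : s' != q' by rewrite eq_sym.
set x := wsum m w.
have hxm : in_tri vert tri m x by apply: in_tri_w => // t; apply: ltW.
pose w' t : R := if t == p' then mu0 else if t == q' then mu1 else eps.
have hx' : x = wsum m' w'.
  have g1 := sum3_perm (fun t => w t * (u m t).1) npq nqs0 nps0.
  have g2 := sum3_perm (fun t => w t * (u m t).2) npq nqs0 nps0.
  have f1 := sum3_perm (fun t => w' t * (u m' t).1) npq' nqs nsp.
  have f2 := sum3_perm (fun t => w' t * (u m' t).2) npq' nqs nsp.
  simpl in g1, g2, f1, f2.
  rewrite /x /wsum g1 g2 f1 f2 /w /w' !eqxx (negbTE nps0) (negbTE nqs0).
  rewrite (negbTE ns'p) (negbTE ns'q) eq_sym (negbTE npq') /u hp' hq' hs'.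
  by rewrite -/i -/j -x1 -x2.
have hxm' : in_tri vert tri m' x.
  rewrite hx'; apply: in_tri_w.
    by move=> t; rewrite /w'; case: (t == p') => //; case: (t == q') => //; apply: ltW.
  rewrite (sum3_perm w' npq' nqs nsp) /w' !eqxx (negbTE ns'p) (negbTE ns'q).
  by rewrite eq_sym (negbTE npq') -hs; ring.
have nmm' : m != m' by rewrite eq_sym.
case: (Hc m m' nmm') => [H0|[[i0' [h1 h2 Hx]]|[i'' [j'' [nij'' /andP [hi'' hj''] _ Hx]]]]].
- by case: (H0 x).
- have vi : vert i = vert i0'.
    apply: Hx; first exact: (in_tri_vertex m p).
    by rewrite -hp'; exact: (in_tri_vertex m' p').
  have vj : vert j = vert i0'.
    apply: Hx; first exact: (in_tri_vertex m q).
    by rewrite -hq'; exact: (in_tri_vertex m' q').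
  by move: nij; rewrite (Hinj _ _ (etrans vi (esym vj))) eqxx.
- case: (Hx x hxm hxm') => l [_ _ xe].
  case: (tri_hasP hi'') => a ha; case: (tri_hasP hj'') => b hb.
  have nab : a != b by apply: contraNneq nij'' => e; rewrite -ha -hb e.
  have := area_wsum m nab ws.
  rewrite -/x xe /u ha hb.
  have -> : area2 (vert i'') (vert j'') ((1 - l) * (vert i'').1 + l * (vert j'').1,
      (1 - l) * (vert i'').2 + l * (vert j'').2) = 0 by rewrite /area2 /=; ring.
  move/esym/eqP; rewrite mulf_eq0 => /orP [/eqP hw0|ha0].
    by move: (wpos (third a b)); rewrite hw0 ltxx.
  case: (thirdP nab) => hc1 hc2.
  have hbc : b != third a b by rewrite eq_sym.
  have hac : a != third a b by rewrite eq_sym.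
  have := perm_area_neq0 (u := u m) nab hbc hac (HA m).
  by rewrite /u ha hb (eqP ha0) eqxx.
Qed.
End Geo3.
Section Rep.
Variable R : realFieldType.
Local Notation point := (R * R)%type.
Local Notation poly2 := {mpoly R[2]}.
Implicit Types (c : nat -> nat -> nat -> R).

Lemma sum2E (V : nmodType) (F : 'I_2 -> V) : \sum_(r < 2) F r = F o0 + F o1.
Proof.
rewrite (@big_ord_recl _ _ _ 1) (@big_ord_recl _ _ _ 0) big_ord0 addr0.
by congr (F _ + F _); apply: val_inj.
Qed.

Lemma taylor_aff (nv : nat) (vert : 'I_nv -> point) (P : poly2) i :
  taylor1 vert P i = aff (evalp P (vert i) - dv o0 P (vert i) * (vert i).1
                           - dv o1 P (vert i) * (vert i).2)
                         (dv o0 P (vert i)) (dv o1 P (vert i)).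
Proof. rewrite /taylor1 sum2E /aff /dv /coord /= -!mul_mpolyC; ring. Qed.

Definition lin3 (l : R * R * R) (t0 t1 t2 : poly2) : poly2 :=
  l.1.1 *: t0 + l.1.2 *: t1 + l.2 *: t2.

Definition ctrip (l l' l'' : R * R * R) : nat -> nat -> nat -> R :=
  let: (a0, a1, a2) := l in let: (b0, b1, b2) := l' in let: (d0, d1, d2) := l'' in
  fun x y z => match x, y, z with
  | 3, 0, 0 => a0 * b0 * d0 | 0, 3, 0 => a1 * b1 * d1 | 0, 0, 3 => a2 * b2 * d2
  | 2, 1, 0 => (a0 * b0 * d1 + a0 * b1 * d0 + a1 * b0 * d0) / 3
  | 2, 0, 1 => (a0 * b0 * d2 + a0 * b2 * d0 + a2 * b0 * d0) / 3
  | 1, 2, 0 => (a0 * b1 * d1 + a1 * b0 * d1 + a1 * b1 * d0) / 3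
  | 1, 0, 2 => (a0 * b2 * d2 + a2 * b0 * d2 + a2 * b2 * d0) / 3
  | 0, 2, 1 => (a1 * b1 * d2 + a1 * b2 * d1 + a2 * b1 * d1) / 3
  | 0, 1, 2 => (a1 * b2 * d2 + a2 * b1 * d2 + a2 * b2 * d1) / 3
  | _, _, _ => (a0 * b1 * d2 + a0 * b2 * d1 + a1 * b0 * d2 + a1 * b2 * d0
                + a2 * b0 * d1 + a2 * b1 * d0) / 6
  end.

Lemma mul3K (x : R) : 3 * (x / 3) = x.
Proof. by rewrite mulrC divfK // pnatr_eq0. Qed.
Lemma mul6K (x : R) : 6 * (x / 6) = x.
Proof. by rewrite mulrC divfK // pnatr_eq0. Qed.

Lemma triple l l' l'' (t0 t1 t2 : poly2) :
  lin3 l t0 t1 t2 * lin3 l' t0 t1 t2 * lin3 l'' t0 t1 t2 = BBpoly (ctrip l l' l'') t0 t1 t2.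
Proof.
case: l => [[a0 a1] a2]; case: l' => [[b0 b1] b2]; case: l'' => [[d0 d1] d2].
rewrite /BBpoly /lin3 /ctrip /= !mul3K mul6K -!mul_mpolyC; ring.
Qed.

Definition Rep (t0 t1 t2 : poly2) (f : poly2) := exists c, f = BBpoly c t0 t1 t2.

Lemma Rep0 t0 t1 t2 : Rep t0 t1 t2 0.
Proof. by exists (fun _ _ _ => 0); rewrite /BBpoly !mulr0 !scale0r !addr0. Qed.

Lemma RepD t0 t1 t2 f g : Rep t0 t1 t2 f -> Rep t0 t1 t2 g -> Rep t0 t1 t2 (f + g).
Proof.
move=> [c1 ->] [c2 ->]; exists (fun x y z => 1 * c1 x y z + c2 x y z).
by rewrite BBpoly_lin scale1r.
Qed.

Lemma RepZ t0 t1 t2 a f : Rep t0 t1 t2 f -> Rep t0 t1 t2 (a *: f).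
Proof.
move=> [c1 ->]; exists (fun x y z => a * c1 x y z + 0).
by rewrite BBpoly_lin [BBpoly (fun _ _ _ => 0) _ _ _]/BBpoly !mulr0 !scale0r !addr0.
Qed.

Lemma RepT t0 t1 t2 l l' l'' f : f = lin3 l t0 t1 t2 * lin3 l' t0 t1 t2 * lin3 l'' t0 t1 t2 ->
  Rep t0 t1 t2 f.
Proof. by move=> ->; rewrite triple; eexists. Qed.

Lemma XE (u0 u1 u2 : point) : area2 u0 u1 u2 != 0 ->
  let A := area2 u0 u1 u2 in
  let t0 := baff u1 u2 A in let t1 := baff u2 u0 A in let t2 := baff u0 u1 A in
  [/\ 'X_o0 = lin3 (u0.1, u1.1, u2.1) t0 t1 t2, 'X_o1 = lin3 (u0.2, u1.2, u2.2) t0 t1 t2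
    & 1 = lin3 (1, 1, 1) t0 t1 t2].
Proof.
move=> hA A t0 t1 t2.
have lc : forall k0 k1 k2 (x0 a0 b0 x1 a1 b1 x2 a2 b2 : R),
  k0 *: aff x0 a0 b0 + k1 *: aff x1 a1 b1 + k2 *: aff x2 a2 b2 =
  aff (k0 * x0 + k1 * x1 + k2 * x2) (k0 * a0 + k1 * a1 + k2 * a2) (k0 * b0 + k1 * b1 + k2 * b2).
  by move=> *; rewrite /aff -!mul_mpolyC !rmorphD !rmorphM /=; ring.
have eX : 'X_o0 = aff 0 1 0 :> poly2 by rewrite /aff scale1r scale0r mpolyC0 add0r addr0.
have eY : 'X_o1 = aff 0 0 1 :> poly2 by rewrite /aff scale1r scale0r mpolyC0 add0r add0r.
have e1 : 1 = aff 1 0 0 :> poly2 by rewrite /aff !scale0r mpolyC1 !addr0.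
rewrite /lin3 /t0 /t1 /t2 /baff /= !lc eX eY e1; move: hA; rewrite /A /area2 /= => hA.
split; congr aff; field; exact: hA.
Qed.
End Rep.
Section Rep2.
Variable R : realFieldType.
Local Notation point := (R * R)%type.
Local Notation poly2 := {mpoly R[2]}.

Lemma mono_rep (u0 u1 u2 : point) (hA : area2 u0 u1 u2 != 0) a b : (a + b <= 3)%N ->
  let A := area2 u0 u1 u2 in
  Rep (baff u1 u2 A) (baff u2 u0 A) (baff u0 u1 A) ('X_o0 ^+ a * 'X_o1 ^+ b).
Proof.
move=> hab A; case: (XE hA) => eX eY e1.
rewrite eX eY.
set vX := (u0.1, u1.1, u2.1); set vY := (u0.2, u1.2, u2.2); set v1 := (1, 1, 1) : R * R * R.
move: hab; case: a => [|[|[|[|a]]]]; case: b => [|[|[|[|b]]]] //= _;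
 first [ apply: (RepT (l := v1) (l' := v1) (l'' := v1)); rewrite -?e1; ring
       | apply: (RepT (l := vY) (l' := v1) (l'' := v1)); rewrite -?e1; ring
       | apply: (RepT (l := vY) (l' := vY) (l'' := v1)); rewrite -?e1; ring
       | apply: (RepT (l := vY) (l' := vY) (l'' := vY)); rewrite -?e1; ring
       | apply: (RepT (l := vX) (l' := v1) (l'' := v1)); rewrite -?e1; ring
       | apply: (RepT (l := vX) (l' := vY) (l'' := v1)); rewrite -?e1; ring
       | apply: (RepT (l := vX) (l' := vY) (l'' := vY)); rewrite -?e1; ring
       | apply: (RepT (l := vX) (l' := vX) (l'' := v1)); rewrite -?e1; ring
       | apply: (RepT (l := vX) (l' := vX) (l'' := vY)); rewrite -?e1; ring
       | apply: (RepT (l := vX) (l' := vX) (l'' := vX)); rewrite -?e1; ring ].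
Qed.

Lemma mdeg2 (m : 'X_{1.. 2}) : mdeg m = (m o0 + m o1)%N.
Proof.
rewrite mdegE (@big_ord_recl _ _ _ 1) (@big_ord_recl _ _ _ 0) big_ord0 addn0.
by congr (m _ + m _)%N; apply: val_inj.
Qed.

Lemma mono2 (m : 'X_{1.. 2}) : 'X_[m] = 'X_o0 ^+ (m o0) * 'X_o1 ^+ (m o1) :> poly2.
Proof.
rewrite mpolyXE_id (@big_ord_recl _ _ _ 1) (@big_ord_recl _ _ _ 0) big_ord0 mulr1.
by congr ('X__ ^+ m _ * 'X__ ^+ m _); apply: val_inj.
Qed.

Lemma rep3 (u0 u1 u2 : point) (hA : area2 u0 u1 u2 != 0) (P : poly2) :
  inPd 3 P -> exists c, P = BBcubic u0 u1 u2 c.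
Proof.
move=> hP.
suff [c hc] : Rep (baff u1 u2 (area2 u0 u1 u2)) (baff u2 u0 (area2 u0 u1 u2))
                  (baff u0 u1 (area2 u0 u1 u2)) P by exists c; rewrite BBE.
rewrite [X in Rep _ _ _ X](mpolyE P) big_seq.
apply: big_ind => [|f g|m hm]; [exact: Rep0|exact: RepD|apply: RepZ].
rewrite mono2; apply: mono_rep => //.
rewrite -mdeg2 -ltnS; apply: leq_trans (msize_mdeg_lt hm) hP.
Qed.
End Rep2.
Section GId.
Variable R : realFieldType.
Implicit Types (c : nat -> nat -> nat -> R).

Lemma GammaId1 c b0 b1 b2 : b0 + b1 + b2 = 1 -> b0 != 0 -> 1 - b0 != 0 ->
 (2 * b0 * (1 - b0))^-1 * (blos c b0 b1 b2 0 1 0 + blos c b0 b1 b2 0 0 1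
   - b1 ^+ 2 * (c 0%N 3%N 0%N + c 0%N 2%N 1%N) - 2 * b1 * b2 * (c 0%N 2%N 1%N + c 0%N 1%N 2%N)
   - b2 ^+ 2 * (c 0%N 1%N 2%N + c 0%N 0%N 3%N) - 2 * b1 * b0 * c 1%N 2%N 0%N
   - 2 * b2 * b0 * c 1%N 0%N 2%N
   - b0 ^+ 2 * (c 2%N 1%N 0%N + c 2%N 0%N 1%N)) = c 1%N 1%N 1%N.
Proof.
move=> hs h2 h2'.
have -> : b1 = 1 - b0 - b2 by rewrite -hs; ring.
rewrite /blos /bbval /bbd0 /bbd1 /bbd2.
field. by rewrite h2 h2'.
Qed.

Lemma GammaId2 c b0 b1 b2 : b0 + b1 + b2 = 1 -> b1 != 0 -> 1 - b1 != 0 ->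
 (2 * b1 * (1 - b1))^-1 * (blos c b0 b1 b2 0 0 1 + blos c b0 b1 b2 1 0 0
   - b2 ^+ 2 * (c 0%N 0%N 3%N + c 1%N 0%N 2%N) - 2 * b2 * b0 * (c 1%N 0%N 2%N + c 2%N 0%N 1%N)
   - b0 ^+ 2 * (c 2%N 0%N 1%N + c 3%N 0%N 0%N) - 2 * b2 * b1 * c 0%N 1%N 2%N
   - 2 * b0 * b1 * c 2%N 1%N 0%N
   - b1 ^+ 2 * (c 0%N 2%N 1%N + c 1%N 2%N 0%N)) = c 1%N 1%N 1%N.
Proof.
move=> hs h2 h2'.
have -> : b0 = 1 - b1 - b2 by rewrite -hs; ring.
rewrite /blos /bbval /bbd0 /bbd1 /bbd2.
field. by rewrite h2 h2'.
Qed.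

Lemma bbv100 c : bbval c 1 0 0 = c 3%N 0%N 0%N. Proof. rewrite /bbval; ring. Qed.
Lemma bbv010 c : bbval c 0 1 0 = c 0%N 3%N 0%N. Proof. rewrite /bbval; ring. Qed.
Lemma bbv001 c : bbval c 0 0 1 = c 0%N 0%N 3%N. Proof. rewrite /bbval; ring. Qed.
Lemma bl01 c : blos c 1 0 0 0 1 0 = c 2%N 1%N 0%N.
Proof. by rewrite /blos /bbval /bbd0 /bbd1 /bbd2; field; rewrite ?pnatr_eq0. Qed.
Lemma bl02 c : blos c 1 0 0 0 0 1 = c 2%N 0%N 1%N.
Proof. by rewrite /blos /bbval /bbd0 /bbd1 /bbd2; field; rewrite ?pnatr_eq0. Qed.
Lemma bl10 c : blos c 0 1 0 1 0 0 = c 1%N 2%N 0%N.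
Proof. by rewrite /blos /bbval /bbd0 /bbd1 /bbd2; field; rewrite ?pnatr_eq0. Qed.
Lemma bl12 c : blos c 0 1 0 0 0 1 = c 0%N 2%N 1%N.
Proof. by rewrite /blos /bbval /bbd0 /bbd1 /bbd2; field; rewrite ?pnatr_eq0. Qed.
Lemma bl20 c : blos c 0 0 1 1 0 0 = c 1%N 0%N 2%N.
Proof. by rewrite /blos /bbval /bbd0 /bbd1 /bbd2; field; rewrite ?pnatr_eq0. Qed.
Lemma bl21 c : blos c 0 0 1 0 1 0 = c 0%N 1%N 2%N.
Proof. by rewrite /blos /bbval /bbd0 /bbd1 /bbd2; field; rewrite ?pnatr_eq0. Qed.
End GId.

Section Tay.
Variable R : realFieldType.
Local Notation point := (R * R)%type.
Local Notation poly2 := {mpoly R[2]}.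
Implicit Types (c : nat -> nat -> nat -> R).

Definition tau (u0 u1 u2 y : point) : R * R * R :=
  (area2 y u1 u2 / area2 u0 u1 u2, area2 y u2 u0 / area2 u0 u1 u2,
   area2 y u0 u1 / area2 u0 u1 u2).

Lemma tau0 (u0 u1 u2 : point) : area2 u0 u1 u2 != 0 -> tau u0 u1 u2 u0 = (1, 0, 0).
Proof. by move=> hA; rewrite /tau; congr (_,_,_); move: hA; rewrite /area2 => hA; field. Qed.
Lemma tau1 (u0 u1 u2 : point) : area2 u0 u1 u2 != 0 -> tau u0 u1 u2 u1 = (0, 1, 0).
Proof. by move=> hA; rewrite /tau; congr (_,_,_); move: hA; rewrite /area2 => hA; field. Qed.
Lemma tau2 (u0 u1 u2 : point) : area2 u0 u1 u2 != 0 -> tau u0 u1 u2 u2 = (0, 0, 1).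
Proof. by move=> hA; rewrite /tau; congr (_,_,_); move: hA; rewrite /area2 => hA; field. Qed.
Lemma tau_sum (u0 u1 u2 y : point) : area2 u0 u1 u2 != 0 ->
  (tau u0 u1 u2 y).1.1 + (tau u0 u1 u2 y).1.2 + (tau u0 u1 u2 y).2 = 1.
Proof. by move=> hA; rewrite /tau /=; move: hA; rewrite /area2 => hA; field. Qed.

Lemma bary_rot0 (u0 u1 u2 y : point) : bary u0 u1 u2 y = tau u0 u1 u2 y.
Proof. by rewrite /bary /tau; congr (_,_,_); congr (_ / _); rewrite /area2; ring. Qed.
Lemma bary_rot1 (u0 u1 u2 y : point) : bary u1 u2 u0 y =
  ((tau u0 u1 u2 y).1.2, (tau u0 u1 u2 y).2, (tau u0 u1 u2 y).1.1).
Proof.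
rewrite /bary /tau /=; have -> : area2 u1 u2 u0 = area2 u0 u1 u2 by rewrite /area2; ring.
by congr (_,_,_); congr (_ / _); rewrite /area2; ring.
Qed.
Lemma bary_rot2 (u0 u1 u2 y : point) : bary u2 u0 u1 y =
  ((tau u0 u1 u2 y).2, (tau u0 u1 u2 y).1.1, (tau u0 u1 u2 y).1.2).
Proof.
rewrite /bary /tau /=; have -> : area2 u2 u0 u1 = area2 u0 u1 u2 by rewrite /area2; ring.
by congr (_,_,_); congr (_ / _); rewrite /area2; ring.
Qed.

Lemma pv_TB (nv : nat) (vert : 'I_nv -> point) P (u0 u1 u2 : point) c :
  P = BBcubic u0 u1 u2 c -> forall a,
  pv vert (taylor1 vert P) a = bbval c (tau u0 u1 u2 (vert a)).1.1
     (tau u0 u1 u2 (vert a)).1.2 (tau u0 u1 u2 (vert a)).2.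
Proof. by move=> hP a; rewrite /pv taylor_aff ev_aff hP evBB; ring. Qed.

Lemma pe_TB (nv : nat) (vert : 'I_nv -> point) P (u0 u1 u2 : point) c :
  area2 u0 u1 u2 != 0 ->
  P = BBcubic u0 u1 u2 c -> forall a b,
  pe vert (taylor1 vert P) a b = blos c (tau u0 u1 u2 (vert a)).1.1
     (tau u0 u1 u2 (vert a)).1.2 (tau u0 u1 u2 (vert a)).2
     (tau u0 u1 u2 (vert b)).1.1 (tau u0 u1 u2 (vert b)).1.2 (tau u0 u1 u2 (vert b)).2.
Proof.
move=> hA hP a b; rewrite /pe taylor_aff ev_aff hP evBB !dvBB /gr /sel /= /blos /tau /=.
move: hA; rewrite /area2 => hA; field; exact: hA.
Qed.
End Tay.
Lemma third012 : [/\ third i0 i1 = i2, third i1 i2 = i0 & third i2 i0 = i1].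
Proof.
have H : forall p q s, p != q -> q != s -> p != s -> third p q = s.
  move=> p q s h1 h2 h3; case: (thirdP h1) => t1 t2.
  move: h1 h2 h3 t1 t2; set t := third p q.
  case: (ord3P p) => [->|[->|->]]; case: (ord3P q) => [->|[->|->]];
  case: (ord3P s) => [->|[->|->]]; case: (ord3P t) => [->|[->|->]] //.
by split; apply: H.
Qed.

Lemma frac_facts (R : realFieldType) (X A : R) : A != 0 -> X != 0 -> X != A ->
  X / A != 0 /\ 1 - X / A != 0.
Proof.
move=> hA hX hXA; split; first by rewrite mulf_neq0 ?invr_eq0.
have -> : 1 - X / A = (A - X) / A by field.
by rewrite mulf_neq0 ?invr_eq0 // subr_eq0 eq_sym.
Qed.

Section GT.
Variables (R : realFieldType) (nv nt : nat) (vert : 'I_nv -> R * R)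
  (tri : 'I_nt -> 'I_3 -> 'I_nv).
Local Notation point := (R * R)%type.
Local Notation poly2 := {mpoly R[2]}.
Hypothesis HT : is_triangulation vert tri.
Variables (P : poly2) (m : 'I_nt) (c : nat -> nat -> nat -> R).
Let u0 := vert (tri m i0).
Let u1 := vert (tri m i1).
Let u2 := vert (tri m i2).
Hypothesis hP : P = BBcubic u0 u1 u2 c.

Let hA : area2 u0 u1 u2 != 0.
Proof. by case: HT => _ HA _ _ _; apply: HA. Qed.

Lemma Gamma_T0 m' : nbr tri m (tri m i0) (tri m i1) = Some m' ->
  Gamma vert tri (taylor1 vert P) m (tri m i0) (tri m i1) (tri m i2) = c 1%N 1%N 1%N.
Proof.
move=> hn.
have npq : i0 != i1 by [].
case: (geom HT npq hn); case: third012 => -> _ _.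
rewrite /Gamma hn; set k' := Defs.opp _ _ _ _ => g1 g2.
rewrite -/u0 -/u1 -/u2 in g1 g2 *.
rewrite bary_rot0 !(pv_TB vert hP) !(pe_TB vert hA hP) (tau0 hA) (tau1 hA) (tau2 hA).
have hs := tau_sum (vert k') hA.
case E: (tau u0 u1 u2 (vert k')) hs => [[b0 b1] b2] /= hs.
rewrite ?bbv100 ?bbv010 ?bbv001 ?bl01 ?bl02 ?bl10 ?bl12 ?bl20 ?bl21.
have eb : b2 = area2 u0 u1 (vert k') / area2 u0 u1 u2.
  by move: E; rewrite /tau => -[_ _ <-]; congr (_ / _); rewrite /area2; ring.
have [h1 h2] := frac_facts hA g1 g2.
rewrite -eb in h1 h2.
exact: GammaId0.
Qed.

Lemma Gamma_T1 m' : nbr tri m (tri m i1) (tri m i2) = Some m' ->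
  Gamma vert tri (taylor1 vert P) m (tri m i1) (tri m i2) (tri m i0) = c 1%N 1%N 1%N.
Proof.
move=> hn.
have npq : i1 != i2 by [].
case: (geom HT npq hn); case: third012 => _ -> _.
rewrite /Gamma hn; set k' := Defs.opp _ _ _ _ => g1 g2.
rewrite -/u0 -/u1 -/u2 in g1 g2 *.
have eA : area2 u1 u2 u0 = area2 u0 u1 u2 by rewrite /area2; ring.
rewrite eA in g2.
rewrite bary_rot1 !(pv_TB vert hP) !(pe_TB vert hA hP) (tau0 hA) (tau1 hA) (tau2 hA).
have hs := tau_sum (vert k') hA.
case E: (tau u0 u1 u2 (vert k')) hs => [[b0 b1] b2] /= hs.
rewrite ?bbv100 ?bbv010 ?bbv001 ?bl01 ?bl02 ?bl10 ?bl12 ?bl20 ?bl21.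
have eb : b0 = area2 u1 u2 (vert k') / area2 u0 u1 u2.
  by move: E; rewrite /tau => -[<- _ _]; congr (_ / _); rewrite /area2; ring.
have [h1 h2] := frac_facts hA g1 g2.
rewrite -eb in h1 h2.
exact: GammaId1.
Qed.

Lemma Gamma_T2 m' : nbr tri m (tri m i2) (tri m i0) = Some m' ->
  Gamma vert tri (taylor1 vert P) m (tri m i2) (tri m i0) (tri m i1) = c 1%N 1%N 1%N.
Proof.
move=> hn.
have npq : i2 != i0 by [].
case: (geom HT npq hn); case: third012 => _ _ ->.
rewrite /Gamma hn; set k' := Defs.opp _ _ _ _ => g1 g2.
rewrite -/u0 -/u1 -/u2 in g1 g2 *.
have eA : area2 u2 u0 u1 = area2 u0 u1 u2 by rewrite /area2; ring.
rewrite eA in g2.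
rewrite bary_rot2 !(pv_TB vert hP) !(pe_TB vert hA hP) (tau0 hA) (tau1 hA) (tau2 hA).
have hs := tau_sum (vert k') hA.
case E: (tau u0 u1 u2 (vert k')) hs => [[b0 b1] b2] /= hs.
rewrite ?bbv100 ?bbv010 ?bbv001 ?bl01 ?bl02 ?bl10 ?bl12 ?bl20 ?bl21.
have eb : b1 = area2 u2 u0 (vert k') / area2 u0 u1 u2.
  by move: E; rewrite /tau => -[_ <- _]; congr (_ / _); rewrite /area2; ring.
have [h1 h2] := frac_facts hA g1 g2.
rewrite -eb in h1 h2.
exact: GammaId2.
Qed.
Lemma centroid_T : every_tri_has_interior_edge tri ->
  centroid_coef vert tri (taylor1 vert P) m = c 1%N 1%N 1%N.
Proof.
move=> He; rewrite /centroid_coef.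
set ie := [seq e <- _ | _].
have hG : forall e, e \in ie ->
    Gamma vert tri (taylor1 vert P) m e.1.1 e.1.2 e.2 = c 1%N 1%N 1%N.
  move=> e; rewrite mem_filter => /andP [hint hin]; move: hin hint.
  rewrite !inE => /or3P [] /eqP -> /=; rewrite /interior_edge;
    case hn: nbr => [m'|] // _.
  - exact: Gamma_T0 hn.
  - exact: Gamma_T1 hn.
  - exact: Gamma_T2 hn.
have hne : (0 < size ie)%N.
  by rewrite size_filter -has_count /= orbF; apply: He.
rewrite (eq_big_seq (fun _ => c 1%N 1%N 1%N)) //.
have -> : forall (s : seq ('I_nv * 'I_nv * 'I_nv)) (x : R), \sum_(e <- s) x = x *+ size s.
  by move=> s x; elim: s => [|e s IH]; rewrite ?big_nil ?big_cons ?IH ?mulrS.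
by rewrite -[_ *+ size ie]mulr_natr mulfK // pnatr_eq0 -lt0n.
Qed.

Lemma spline_T_m : every_tri_has_interior_edge tri ->
  spline vert tri (taylor1 vert P) m = P.
Proof.
move=> He.
rewrite splineE [RHS]hP !BBE /BBpoly /= centroid_T //.
rewrite !(pv_TB vert hP) !(pe_TB vert hA hP) -/u0 -/u1 -/u2 (tau0 hA) (tau1 hA) (tau2 hA) /=.
by rewrite ?bbv100 ?bbv010 ?bbv001 ?bl01 ?bl02 ?bl10 ?bl12 ?bl20 ?bl21.
Qed.
End GT.
From mathcomp Require Import zify.
Section Dim.
Variables (R : realFieldType) (nv nt : nat) (vert : 'I_nv -> R * R)
  (tri : 'I_nt -> 'I_3 -> 'I_nv).
Local Notation point := (R * R)%type.
Local Notation poly2 := {mpoly R[2]}.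

Lemma spline_ext (Q1 Q2 : 'I_nv -> poly2) : (forall i, Q1 i = Q2 i) ->
  spline vert tri Q1 = spline vert tri Q2.
Proof. by move=> h; rewrite (functional_extensionality _ _ h). Qed.

Lemma spline0 : spline vert tri (fun _ => 0) = 0.
Proof.
have := spline_linE vert tri 1 (fun _ => 0) (fun _ => 0).
rewrite (@spline_ext (fun i => 1 *: 0 + 0) (fun _ => 0)); last by move=> i; rewrite scale1r addr0.
rewrite scale1r => h.
by apply: (@addrI _ (spline vert tri (fun _ => 0))); rewrite addr0 -h.
Qed.

Lemma splineZ a (G : 'I_nv -> poly2) :
  spline vert tri (fun i => a *: G i) = a *: spline vert tri G.
Proof.
rewrite (@spline_ext _ (fun i => a *: G i + (fun _ => 0) i)); last by move=> i; rewrite addr0.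
by rewrite spline_linE spline0 addr0.
Qed.

Lemma spline_sum n (c : 'I_n -> R) (F : 'I_n -> 'I_nv -> poly2) :
  spline vert tri (fun i => \sum_(k < n) c k *: F k i) =
  \sum_(k < n) c k *: spline vert tri (F k).
Proof.
elim: n c F => [|n IH] c F.
  rewrite big_ord0 -spline0; apply: spline_ext => i; exact: big_ord0.
rewrite big_ord_recr /= -IH.
rewrite (@spline_ext _ (fun i => 1 *: (fun i => \sum_(k < n) c (widen_ord (leqnSn n) k) *:
     F (widen_ord (leqnSn n) k) i) i + (fun i => c ord_max *: F ord_max i) i)).
  by rewrite spline_linE scale1r splineZ.
by move=> i; rewrite big_ord_recr scale1r.
Qed.

Definition Qk (k : 'I_(3 * nv)) : 'I_nv -> poly2 := fun i =>
  (((k %/ 3)%N == i)%:R : R) *: aff (((k %% 3)%N == 0)%:R) (((k %% 3)%N == 1)%:R) (((k %% 3)%N == 2)%:R).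

Lemma div3_lt (k : nat) : (k < 3 * nv)%N -> ((k %/ 3)%N < nv)%N.
Proof. by move=> h; rewrite ltn_divLR // mulnC. Qed.

Lemma idx_lt (i : 'I_nv) t : (t < 3)%N -> (i * 3 + t < 3 * nv)%N.
Proof. move: (ltn_ord i) => hi ht; lia. Qed.

Lemma sum_sel (f : 'I_(3 * nv) -> R) (i : 'I_nv) t (ht : (t < 3)%N) :
  \sum_(k < 3 * nv) f k * ((((k %/ 3)%N == i) && ((k %% 3)%N == t))%:R) =
  f (Ordinal (idx_lt i ht)).
Proof.
rewrite (bigD1 (Ordinal (idx_lt i ht))) //=.
have -> : ((i * 3 + t) %/ 3 == i)%N && ((i * 3 + t) %% 3 == t)%N.
  by rewrite divnMDl // modnMDl divn_small // modn_small // addn0 !eqxx.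
rewrite mulr1 big1 ?addr0 // => k hk.
case E: (((k %/ 3)%N == i) && ((k %% 3)%N == t)); last by rewrite mulr0.
exfalso; move/andP: E => [/eqP e1 /eqP e2]; move: hk; apply/negP; rewrite negbK.
by apply/eqP; apply: val_inj => /=; rewrite (divn_eq k 3) e1 e2.
Qed.

Lemma sumQk (c : 'I_(3 * nv) -> R) i :
  \sum_(k < 3 * nv) c k *: Qk k i =
  aff (c (Ordinal (idx_lt i (isT : (0 < 3)%N)))) (c (Ordinal (idx_lt i (isT : (1 < 3)%N))))
      (c (Ordinal (idx_lt i (isT : (2 < 3)%N)))).
Proof.
have -> : \sum_(k < 3 * nv) c k *: Qk k i =
  aff (\sum_(k < 3 * nv) c k * ((((k %/ 3)%N == i) && ((k %% 3)%N == 0))%:R))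
      (\sum_(k < 3 * nv) c k * ((((k %/ 3)%N == i) && ((k %% 3)%N == 1))%:R))
      (\sum_(k < 3 * nv) c k * ((((k %/ 3)%N == i) && ((k %% 3)%N == 2))%:R)).
  have asc : forall (x k0 a0 b0 : R), x *: aff k0 a0 b0 = aff (x * k0) (x * a0) (x * b0) :> poly2.
    by move=> *; rewrite /aff -!mul_mpolyC !rmorphM /=; ring.
  have asum : forall (f g h : 'I_(3 * nv) -> R),
      \sum_(k < 3 * nv) aff (f k) (g k) (h k) = aff (\sum_k f k) (\sum_k g k) (\sum_k h k) :> poly2.
    move=> f g h; rewrite /aff !big_split /= -!scaler_suml; congr (_ + _ + _).
    by rewrite raddf_sum.
  rewrite /Qk; under eq_bigr => k _ do rewrite scalerA asc.
  rewrite asum; congr aff; apply: eq_bigr => k _;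
    by case: eqP => _; case: eqP => _; rewrite /= ?mulr0 ?mul0r ?mulr1 ?mul1r.
by rewrite (sum_sel c i (isT : (0 < 3)%N)) (sum_sel c i (isT : (1 < 3)%N)) (sum_sel c i (isT : (2 < 3)%N)).
Qed.
End Dim.
Unset Implicit Arguments.
Lemma inPd1_lin (R : realFieldType) (a : R) (p q : {mpoly R[2]}) :
  inPd 1 p -> inPd 1 q -> inPd 1 (a *: p + q).
Proof.
rewrite /inPd => hp hq; apply: leq_trans (msizeD_le _ _) _; rewrite geq_max hq andbT.
exact: leq_trans (msizeZ_le _ _) hp.
Qed.

Theorem mainTheorem1 (R : realFieldType) (nv nt : nat)
    (vert : 'I_nv -> R * R) (tri : 'I_nt -> 'I_3 -> 'I_nv) :
  is_triangulation vert tri ->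
  every_tri_has_interior_edge tri ->
  (* (i) S_2 is a linear subspace of the C^0 piecewise cubics *)
  [/\ (forall s, inS2 vert tri s -> C0cubic vert tri s)
      /\ inS2 vert tri 0
      /\ (forall (a : R) s1 s2, inS2 vert tri s1 -> inS2 vert tri s2 ->
            inS2 vert tri (a *: s1 + s2)),
  (* (ii) C^1 at the vertices *)
      forall Q : 'I_nv -> {mpoly R[2]}, (forall i, inPd 1 (Q i)) ->
        forall (i : 'I_nv) (m : 'I_nt), tri_has tri m i ->
          evalp (spline vert tri Q m) (vert i) = evalp (Q i) (vert i) /\
          (forall r : 'I_2,
             evalp ((spline vert tri Q m)^`M(r)) (vert i) = evalp ((Q i)^`M(r)) (vert i)),
  (* (iii) dim S_2 = 3 n_v *)
      has_dim (inS2 vert tri) (3 * nv) &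
  (* (iv) P_3 is contained in S_2, reproduced through Taylor data *)
      forall P : {mpoly R[2]}, inPd 3 P ->
        spline vert tri (taylor1 vert P) = [ffun => P] /\ inS2 vert tri [ffun => P]].
Proof.
move=> HT He.
have HA : forall m, area2 (vert (tri m i0)) (vert (tri m i1)) (vert (tri m i2)) != 0.
  by case: HT => _ HA _ _ _.
split.
- split; [|split].
  + move=> s [Q [HQ ->]]; split => [m|]; first by rewrite splineE; apply: inPd3_BB.
    exact: spline_C0.
  + exists (fun _ => 0); split; first by move=> i; rewrite /inPd msize0.
    by rewrite spline0.
  + move=> a s1 s2 [Q1 [HQ1 ->]] [Q2 [HQ2 ->]].
    exists (fun i => a *: Q1 i + Q2 i); split; first by move=> i; apply: inPd1_lin.
    by rewrite spline_linE.
- move=> Q HQ i m hi.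
  case: (tri_hasP hi) => p hp.
  have EQ := QAP HQ.
  set k := (fun u => (Q u)@_0%MM) in EQ; set a := (fun u => _) in EQ;
  set b := (fun u => _) in EQ.
  rewrite EQ -hp.
  case: (@spline_vertex R nv nt vert tri k a b m p (HA m)) => h1 h2; split.
    by rewrite h1 /QA ev_aff.
  by move=> r; move: (h2 r); rewrite /dv => ->; rewrite /QA dv_aff.
- exists (fun k => spline vert tri (Qk R k)); split.
  + move=> k; exists (Qk R k); split => // i.
    by rewrite /Qk /inPd; apply: leq_trans (msizeZ_le _ _) (msize_aff _ _ _).
  + move=> c hc k.
    have h0 : spline vert tri (fun i => \sum_(k < 3 * nv) c k *: Qk R k i) = 0.
      by rewrite spline_sum.
    rewrite (spline_ext vert tri (sumQk c)) in h0.
    set k0 := fun i => c (Ordinal (idx_lt i (isT : (0 < 3)%N))) in h0.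
    set a0 := fun i => c (Ordinal (idx_lt i (isT : (1 < 3)%N))) in h0.
    set b0 := fun i => c (Ordinal (idx_lt i (isT : (2 < 3)%N))) in h0.
    have h0' : spline vert tri (QA k0 a0 b0) = 0 := h0.
    set i := Ordinal (div3_lt (ltn_ord k)).
    have [m hm] : exists m, tri_has tri m i by case: HT => _ _ Hcov _ _; apply: Hcov.
    case: (tri_hasP hm) => p hp.
    case: (@spline_vertex R nv nt vert tri k0 a0 b0 m p (HA m)).
    rewrite h0' hp ffunE ev0 => h1 h2.
    have ha : a0 i = 0 by move: (h2 o0); rewrite /dv mderiv0 ev0 /sel /=.
    have hb : b0 i = 0 by move: (h2 o1); rewrite /dv mderiv0 ev0 /sel /=.
    have hk : k0 i = 0 by move: h1; rewrite ha hb !mul0r !addr0.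
    have ek : forall t (ht : (t < 3)%N), (k %% 3)%N = t -> c k = c (Ordinal (idx_lt i ht)).
      move=> t ht et; congr c; apply: val_inj => /=.
      by rewrite -et; apply: divn_eq.
    have : ((k %% 3)%N < 3)%N by rewrite ltn_mod.
    case E: (k %% 3)%N => [|[|[|t]]] // _.
    * by rewrite (ek 0%N isT E).
    * by rewrite (ek 1%N isT E).
    * by rewrite (ek 2%N isT E).
  + move=> s [Q [HQ ->]].
    have EQ := QAP HQ.
    set k := (fun u => (Q u)@_0%MM) in EQ; set a := (fun u => _) in EQ;
    set b := (fun u => _) in EQ.
    exists (fun kk => let i := Ordinal (div3_lt (ltn_ord kk)) in
      if ((kk %% 3)%N == 0%N) then k i else if ((kk %% 3)%N == 1%N) then a i else b i).
    rewrite -spline_sum (spline_ext vert tri (sumQk _)) {1}EQ.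
    apply: spline_ext => i; rewrite /QA /=.
    rewrite !modnMDl !modn_small //=.
    by congr aff; [congr k|congr a|congr b]; apply: val_inj => /=;
      rewrite divnMDl // divn_small // addn0.
- move=> P hP.
  have hs : spline vert tri (taylor1 vert P) = [ffun => P].
    apply/ffunP => m; rewrite [RHS]ffunE.
    case: (rep3 (HA m) hP) => c hc.
    exact: (spline_T_m HT hc He).
  split => //.
  exists (taylor1 vert P); split => //.
  by move=> i; rewrite taylor_aff; apply: inPd1_aff.
Qed.
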